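(* Let $q\ge 2$, $n\ge 1$ and $\varepsilon\in\mathbb{N}$ with $\varepsilon\le n$. Let $x\in\mathbb{Z}_q^n$ be a hidden vector, and suppose the attacker has access to an oracle $\texttt{Match}_{x,\varepsilon}$ which, on a query $y\in\mathbb{Z}_q^n$, returns $1$ if $d(x,y)\le\varepsilon$ and $0$ otherwise, and which additionally reveals the set of error positions $\{i: x_i\neq y_i\}$ (but not the values $x_i$) whenever $d(x,y)\le\varepsilon$. Then there is an adaptive query strategy that recovers $x$ using, in the worst case, $\mathcal{O}(q^{n-\varepsilon}+q)$ queries to $\texttt{Match}_{x,\varepsilon}$.
   Context: $\mathbb{Z}_q^n=\{0,\dots,q-1\}^n$ is equipped with the Hamming distance $d(x,y)=|\{i\in\{1,\dots,n\}: x_i\neq y_i\}|$. The attacker may choose each query adaptively based on previous oracle answers; complexity is measured as the number of oracle queries. *)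

(* Defs.v *)
From mathcomp Require Import all_boot.
Set Implicit Arguments. Unset Strict Implicit. Unset Printing Implicit Defensive.

Definition word (q n : nat) := {ffun 'I_n -> 'I_q}.

Definition diffset q n (x y : word q n) : {set 'I_n} := [set i | x i != y i].

Definition hamming q n (x y : word q n) : nat := #|diffset x y|.

(* The oracle Match_{x,eps} with error-position leakage:
   None  <-> answer 0 (d(x,y) > eps);
   Some S <-> answer 1 (d(x,y) <= eps), together with S = {i | x_i <> y_i}. *)
Definition match_oracle q n (eps : nat) (x y : word q n) : option {set 'I_n} :=
  if hamming x y <= eps then Some (diffset x y) else None.

(* Adaptive query strategies (decision trees): either output a guess,
   or query y and continue depending on the oracle answer. *)
Inductive strategy (q n : nat) : Type :=
| Guess of word q n
| Ask of word q n & (option {set 'I_n} -> strategy q n).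

Fixpoint run q n (eps : nat) (x : word q n) (s : strategy q n) : word q n * nat :=
  match s with
  | Guess w => (w, 0)
  | Ask y k => let r := run eps x (k (match_oracle eps x y)) in (r.1, r.2.+1)
  end.

(* Main.v *)
Require Import Defs.
From mathcomp Require Import all_boot.
Set Implicit Arguments. Unset Strict Implicit. Unset Printing Implicit Defensive.

Section S.
Variables (q n eps : nat).

Definition zq (S : {set 'I_n}) (y : word q n) (v : 'I_q) : word q n :=
  [ffun i => if i \in S then v else y i].

Definition okp (i : 'I_n) (p : 'I_q * option {set 'I_n}) : bool :=
  if p.2 is Some T then i \notin T else false.

Definition decode (S : {set 'I_n}) (y : word q n) (acc : seq ('I_q * option {set 'I_n})) : word q n :=
  [ffun i => if i \in S then head (y i) [seq p.1 | p <- acc & okp i p] else y i].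

Fixpoint phase2 (S : {set 'I_n}) (y : word q n) (vs : seq 'I_q)
   (acc : seq ('I_q * option {set 'I_n})) : strategy q n :=
  match vs with
  | [::] => Guess (decode S y acc)
  | v :: vs' => Ask (zq S y v) (fun r => phase2 S y vs' ((v, r) :: acc))
  end.

Fixpoint phase1 (d : word q n) (cands : seq (word q n)) : strategy q n :=
  match cands with
  | [::] => Guess d
  | y :: ys => Ask y (fun r => match r with
                     | None => phase1 d ys
                     | Some T => phase2 T y (enum 'I_q) [::] end)
  end.

Variable x : word q n.

Definition ans S y (v : 'I_q) := (v, match_oracle eps x (zq S y v)).

Lemma run_phase2 S y vs acc :
  run eps x (phase2 S y vs acc) = (decode S y (catrev (map (ans S y) vs) acc), size vs).
Proof.
elim: vs acc => [|v vs IH] acc //=.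
by rewrite IH.
Qed.

Lemma head_all (T : eqType) (d c : T) (s : seq T) :
  (forall a, a \in s -> a = c) -> c \in s -> head d s = c.
Proof. by case: s => [|a s] //= H _; apply: H; rewrite inE eqxx. Qed.

Lemma phase2_ok y : hamming x y <= eps ->
  (run eps x (phase2 (diffset x y) y (enum 'I_q) [::])).1 = x.
Proof.
move=> hxy; rewrite run_phase2 /=.
set S := diffset x y.
have hz v : hamming x (zq S y v) <= eps.
  apply: leq_trans hxy; apply: subset_leq_card; apply/subsetP => i.
  rewrite /diffset !inE /zq ffunE; case: ifP => //.
  by rewrite /S /diffset inE.
apply/ffunP => i; rewrite ffunE.
case: ifP => iS; last first.
  by move: iS; rewrite /S /diffset inE => /negbFE /eqP.
apply: head_all.
- move=> a /mapP [p]; rewrite mem_filter catrevE cats0 mem_rev.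
  move=> /andP [okpi /mapP [v _ pE]] ->; rewrite pE in okpi *.
  move: okpi; rewrite /okp /ans /=.
  rewrite /match_oracle hz /= /diffset inE negbK.
  by rewrite /zq ffunE iS => /eqP.
- apply/mapP; exists (ans S y (x i)) => //.
  rewrite mem_filter catrevE cats0 mem_rev; apply/andP; split.
    by rewrite /okp /ans /= /match_oracle hz /= /diffset inE negbK /zq ffunE iS.
  by apply/mapP; exists (x i) => //; rewrite mem_enum.
Qed.

Lemma run_phase1 d cands : has (fun y => hamming x y <= eps) cands ->
  (run eps x (phase1 d cands)).1 = x /\ (run eps x (phase1 d cands)).2 <= size cands + q.
Proof.
elim: cands => [|y ys IH] //= /orP [h|h].
  rewrite /match_oracle h /= phase2_ok // run_phase2 /= size_enum_ord.
  by split => //; rewrite addSn ltnS leq_addl.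
rewrite /match_oracle; case: ifP => h' /=.
  rewrite phase2_ok // run_phase2 /= size_enum_ord.
  by split => //; rewrite addSn ltnS leq_addl.
by have [-> H2] := IH h; split => //; rewrite addSn ltnS.
Qed.

End S.

Definition posi (n eps : nat) (j : 'I_(n - eps)) : 'I_n :=
  Ordinal (etrans (esym (ltn_subRL eps j n)) (ltn_ord j)).

Definition ext q n eps (d : 'I_q) (f : {ffun 'I_(n - eps) -> 'I_q}) : word q n :=
  [ffun i : 'I_n => if eps <= i then
     (if @insub _ (fun k => k < n - eps) 'I_(n - eps) (i - eps) is Some j then f j else d)
     else d].

Lemma card_small n eps (A : {set 'I_n}) : (forall i, i \in A -> i < eps) -> #|A| <= eps.
Proof.
move=> H; rewrite cardE -(size_map val) -[X in _ <= X](size_iota 0 eps).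
apply: uniq_leq_size; first by rewrite (map_inj_uniq val_inj) enum_uniq.
move=> k /mapP [i]; rewrite mem_enum => /H iA ->.
by rewrite mem_iota.
Qed.

Theorem theorem2 :
  exists C : nat, forall (q n eps : nat), 2 <= q -> 1 <= n -> eps <= n ->
    exists s : strategy q n, forall x : word q n,
      (run eps x s).1 = x /\ (run eps x s).2 <= C * (q ^ (n - eps) + q).
Proof.
exists 1 => q n eps hq hn he.
have d : 'I_q by exists 0; apply: leq_trans hq.
pose cands := map (@ext q n eps d) (enum {ffun 'I_(n - eps) -> 'I_q}).
exists (phase1 [ffun=> d] cands) => x.
have Hs : size cands = q ^ (n - eps).
  by rewrite size_map -cardE card_ffun !card_ord.
rewrite mul1n -Hs; apply: run_phase1.
apply/hasP; exists (@ext q n eps d [ffun j => x (@posi n eps j)]).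
  by apply/mapP; exists [ffun j => x (@posi n eps j)] => //; rewrite mem_enum.
apply: card_small => i; rewrite /diffset inE /ext ffunE.
case: leqP => // hi.
have hk : i - eps < n - eps by rewrite ltn_sub2r // (leq_ltn_trans hi).
rewrite (insubT (fun k => k < n - eps) hk) ffunE.
have -> : @posi n eps (Sub (i - eps) hk : 'I_(n - eps)) = i.
  by apply: val_inj; rewrite /= subnKC.
by rewrite eqxx.
Qed.
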